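(* The conjugacy growth of Thompson's group $V$ is exponential.
   Context: Let $\mathfrak{C}=\{0,1\}^\omega$ be the Cantor space with the product topology. For $w_1,w_2\in\{0,1\}^*$, a homeomorphism maps $w_1\mathfrak{C}$ rigidly to $w_2\mathfrak{C}$ if it restricts to $w_1y\mapsto w_2y$. Thompson's group $V$ is the group of homeomorphisms $v$ of $\mathfrak{C}$ such that every $x\in\mathfrak{C}$ lies in a cone $w\mathfrak{C}$ that $v$ maps rigidly onto some cone; $V$ is finitely generated. The conjugacy growth function with respect to a finite generating set sends $n$ to the number of conjugacy classes containing an element of word length at most $n$. Exponential means it is $\sim$-equivalent to $n\mapsto 2^n$, where $f\sim g$ iff $f\preccurlyeq g$ and $g\preccurlyeq f$, and $f\preccurlyeq g$ means there is $\lambda\in\mathbb{N}\setminus\{0\}$ with $f(n)\le\lambda g(\lambda n+\lambda)+\lambda$ for all $n$. *)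

(* Defs.v *)
From Stdlib Require Import Arith List.
Import ListNotations.

Definition cantor := nat -> bool.

Definition word := list bool.

Definition wcat (w : word) (y : cantor) : cantor :=
  fun i => if i <? length w then nth i w false else y (i - length w).

Definition in_cone (w : word) (x : cantor) : Prop :=
  exists y, x = wcat w y.

(* Continuity for the product topology on {0,1}^omega (discrete factors):
   each output coordinate depends only on finitely many input coordinates. *)
Definition continuous_cantor (f : cantor -> cantor) : Prop :=
  forall (x : cantor) (n : nat), exists m : nat, forall y : cantor,
    (forall i, i < m -> y i = x i) -> forall i, i < n -> f y i = f x i.

Definition homeomorphism (f : cantor -> cantor) : Prop :=
  continuous_cantor f /\
  exists g : cantor -> cantor, continuous_cantor g /\
    (forall x, g (f x) = x) /\ (forall x, f (g x) = x).

Definition maps_rigidly (f : cantor -> cantor) (w1 w2 : word) : Prop :=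
  forall y, f (wcat w1 y) = wcat w2 y.

Definition inV (v : cantor -> cantor) : Prop :=
  homeomorphism v /\
  forall x, exists w1 w2, in_cone w1 x /\ maps_rigidly v w1 w2.

Definition is_letter (S : list (cantor -> cantor)) (t : cantor -> cantor) : Prop :=
  exists s, In s S /\
    (t = s \/ ((forall x, s (t x) = x) /\ (forall x, t (s x) = x))).

Definition eval_word (l : list (cantor -> cantor)) : cantor -> cantor :=
  fold_right (fun t acc => fun x => t (acc x)) (fun x => x) l.

Definition generating_set (S : list (cantor -> cantor)) : Prop :=
  (forall s, In s S -> inV s) /\
  (forall v, inV v -> exists l, Forall (is_letter S) l /\ v = eval_word l).

Definition in_ball (S : list (cantor -> cantor)) (n : nat) (v : cantor -> cantor) : Prop :=
  exists l, Forall (is_letter S) l /\ length l <= n /\ v = eval_word l.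

Definition conjV (g h : cantor -> cantor) : Prop :=
  exists c, inV c /\ (fun x => c (g x)) = (fun x => h (c x)).

(* k is the number of conjugacy classes of V containing an element of
   word length at most n: there is a list of k pairwise non-conjugate
   elements of the ball meeting every class that meets the ball. *)
Definition conj_count (S : list (cantor -> cantor)) (n k : nat) : Prop :=
  exists reps : list (cantor -> cantor),
    length reps = k /\
    (forall r, In r reps -> in_ball S n r) /\
    (forall i j, i < k -> j < k -> i <> j ->
       ~ conjV (nth i reps (fun x => x)) (nth j reps (fun x => x))) /\
    (forall v, in_ball S n v -> exists r, In r reps /\ conjV v r).

Definition preceq (f g : nat -> nat) : Prop :=
  exists lam : nat, 0 < lam /\ forall n, f n <= lam * g (lam * n + lam) + lam.

Definition equiv_growth (f g : nat -> nat) : Prop := preceq f g /\ preceq g f.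

(* Main.v *)
Require Import Defs.
From Stdlib Require Import Arith List.
From Stdlib Require Import Lia Classical ClassicalEpsilon FunctionalExtensionality.
Import ListNotations.

Definition ccons (b : bool) (y : cantor) : cantor :=
  fun i => match i with 0 => b | S j => y j end.
Definition ctl (x : cantor) : cantor := fun i => x (S i).

Lemma ccons_eta x : x = ccons (x 0) (ctl x).
Proof. apply functional_extensionality; intros [|i]; reflexivity. Qed.

Lemma ccons_inj a b y z : ccons a y = ccons b z -> a = b /\ y = z.
Proof. intros H. split.
 - exact (f_equal (fun x => x 0) H).
 - apply functional_extensionality; intro i. exact (f_equal (fun x => x (S i)) H). Qed.

Lemma decomp1 (P : cantor -> Prop) : (forall a z, P (ccons a z)) -> forall x, P x.
Proof. intros H x. rewrite (ccons_eta x). apply H. Qed.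

Lemma decomp2 (P : cantor -> Prop) : (forall a b z, P (ccons a (ccons b z))) -> forall x, P x.
Proof. intros H x. rewrite (ccons_eta x), (ccons_eta (ctl x)). apply H. Qed.

Lemma wcat_cons b w y : wcat (b :: w) y = ccons b (wcat w y).
Proof. apply functional_extensionality; intros [|i]; reflexivity. Qed.
Lemma wcat_nil y : wcat [] y = y.
Proof. apply functional_extensionality; intros [|i]; reflexivity. Qed.

Lemma wcat_hi w y k : wcat w y (length w + k) = y k.
Proof. unfold wcat. destruct (Nat.ltb_spec (length w + k) (length w)); [lia|]. f_equal; lia. Qed.
Lemma wcat_lo w y i : i < length w -> wcat w y i = nth i w false.
Proof. unfold wcat. intros. destruct (Nat.ltb_spec i (length w)); [reflexivity|lia]. Qed.

Definition rigid_cover (f : cantor -> cantor) : Prop :=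
  forall x, exists w1 w2, in_cone w1 x /\ maps_rigidly f w1 w2.

Lemma rigid_continuous f : rigid_cover f -> continuous_cantor f.
Proof.
  intros H x n. destruct (H x) as (w1 & w2 & [y Hy] & Hr).
  exists (length w1 + n). intros z Hz.
  set (z' := fun k => z (length w1 + k)).
  assert (Hzc : z = wcat w1 z').
  { apply functional_extensionality; intro i.
    destruct (Nat.lt_ge_cases i (length w1)) as [Hi|Hi].
    - rewrite wcat_lo by exact Hi. rewrite Hz by lia. rewrite Hy. apply wcat_lo; exact Hi.
    - replace i with (length w1 + (i - length w1)) by lia. rewrite wcat_hi. reflexivity. }
  intros i Hi. rewrite Hzc, Hy, !Hr. unfold wcat.
  destruct (Nat.ltb_spec i (length w2)); [reflexivity|].
  unfold z'. rewrite Hz by lia. rewrite Hy. apply wcat_hi.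
Qed.

Lemma inV_of f fi : (forall x, f (fi x) = x) -> (forall x, fi (f x) = x) ->
  rigid_cover f -> rigid_cover fi -> inV f.
Proof. intros H1 H2 R1 R2. split; [split|exact R1].
  - apply rigid_continuous; exact R1.
  - exists fi. repeat split; auto. apply rigid_continuous; exact R2. Qed.

Lemma in_cone0 z : in_cone [] z.
Proof. exists z. rewrite wcat_nil. reflexivity. Qed.
Lemma in_cone1 a z : in_cone [a] (ccons a z).
Proof. exists z. rewrite wcat_cons, wcat_nil. reflexivity. Qed.
Lemma in_cone2 a b z : in_cone [a;b] (ccons a (ccons b z)).
Proof. exists z. rewrite !wcat_cons, wcat_nil. reflexivity. Qed.

Ltac rig := let y := fresh "y" in intro y; rewrite ?wcat_cons, ?wcat_nil; reflexivity.

Definition Flip (x : cantor) : cantor := ccons (negb (x 0)) (ctl x).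
Definition Tm (h : cantor -> cantor) (x : cantor) : cantor :=
  if x 0 then ccons true (h (ctl x)) else x.
Definition Ym (x : cantor) : cantor :=
  if x 0 then ccons false (ccons true (ctl x))
  else if x 1 then ccons true (ctl (ctl x)) else x.
Definition gm (x : cantor) : cantor :=
  if x 0 then ccons true x
  else if x 1 then ccons true (ccons false (ctl (ctl x))) else ctl x.
Definition gi (x : cantor) : cantor :=
  if x 0 then (if x 1 then ctl x else ccons false (ccons true (ctl (ctl x))))
  else ccons false x.

Lemma Tm_true h y : Tm h (ccons true y) = ccons true (h y).
Proof. reflexivity. Qed.
Lemma Tm_false h y : Tm h (ccons false y) = ccons false y.
Proof. reflexivity. Qed.

Lemma Flip_inv x : Flip (Flip x) = x.
Proof. revert x; apply decomp1; intros [|] z; reflexivity. Qed.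
Lemma Ym_inv x : Ym (Ym x) = x.
Proof. revert x; apply decomp2; intros [|] [|] z; reflexivity. Qed.
Lemma gm_gi x : gm (gi x) = x.
Proof. revert x; apply decomp2; intros [|] [|] z; reflexivity. Qed.
Lemma gi_gm x : gi (gm x) = x.
Proof. revert x; apply decomp2; intros [|] [|] z; reflexivity. Qed.
Lemma Tm_inv f fi : (forall x, f (fi x) = x) -> forall x, Tm f (Tm fi x) = x.
Proof. intros H; apply decomp1; intros [|] z; [rewrite !Tm_true, H|]; reflexivity. Qed.
Lemma Tm_comp f h x : Tm (fun y => f (h y)) x = Tm f (Tm h x).
Proof. revert x; apply decomp1; intros [|] z; reflexivity. Qed.
Lemma Tm_id x : Tm (fun y => y) x = x.
Proof. revert x; apply decomp1; intros [|] z; reflexivity. Qed.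
Lemma TT h x : Tm (Tm h) x = gm (Tm h (gi x)).
Proof. revert x; apply decomp2; intros [|] [|] z; reflexivity. Qed.

Lemma rc_Flip : rigid_cover Flip.
Proof. unfold rigid_cover; apply decomp1; intros a z. exists [a], [negb a]. split; [apply in_cone1|rig]. Qed.
Lemma rc_Ym : rigid_cover Ym.
Proof. unfold rigid_cover; apply decomp2; intros [|] [|] z.
  - exists [true], [false;true]. split; [apply in_cone1|rig].
  - exists [true], [false;true]. split; [apply in_cone1|rig].
  - exists [false;true], [true]. split; [apply in_cone2|rig].
  - exists [false;false], [false;false]. split; [apply in_cone2|rig].
Qed.
Lemma rc_gm : rigid_cover gm.
Proof. unfold rigid_cover; apply decomp2; intros [|] [|] z.
  - exists [true], [true;true]. split; [apply in_cone1|rig].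
  - exists [true], [true;true]. split; [apply in_cone1|rig].
  - exists [false;true], [true;false]. split; [apply in_cone2|rig].
  - exists [false;false], [false]. split; [apply in_cone2|rig].
Qed.
Lemma rc_gi : rigid_cover gi.
Proof. unfold rigid_cover; apply decomp2; intros [|] [|] z.
  - exists [true;true], [true]. split; [apply in_cone2|rig].
  - exists [true;false], [false;true]. split; [apply in_cone2|rig].
  - exists [false], [false;false]. split; [apply in_cone1|rig].
  - exists [false], [false;false]. split; [apply in_cone1|rig].
Qed.
Lemma rc_T h : rigid_cover h -> rigid_cover (Tm h).
Proof. intros H. unfold rigid_cover; apply decomp1; intros [|] z.
 - destruct (H z) as (w1 & w2 & [y Hy] & Hr). exists (true::w1), (true::w2). split.
   + exists y. rewrite wcat_cons, <- Hy. reflexivity.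
   + intro y'. rewrite !wcat_cons, Tm_true, Hr. reflexivity.
 - exists [false], [false]. split; [apply in_cone1|rig].
Qed.

Lemma V_Flip : inV Flip.
Proof. apply (inV_of Flip Flip Flip_inv Flip_inv rc_Flip rc_Flip). Qed.
Lemma V_Ym : inV Ym.
Proof. apply (inV_of Ym Ym Ym_inv Ym_inv rc_Ym rc_Ym). Qed.
Lemma V_gm : inV gm.
Proof. apply (inV_of gm gi gm_gi gi_gm rc_gm rc_gi). Qed.
Lemma V_gi : inV gi.
Proof. apply (inV_of gi gm gi_gm gm_gi rc_gi rc_gm). Qed.
Lemma V_TFlip : inV (Tm Flip).
Proof. apply (inV_of _ _ (Tm_inv _ _ Flip_inv) (Tm_inv _ _ Flip_inv) (rc_T _ rc_Flip) (rc_T _ rc_Flip)). Qed.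
Lemma V_TYm : inV (Tm Ym).
Proof. apply (inV_of _ _ (Tm_inv _ _ Ym_inv) (Tm_inv _ _ Ym_inv) (rc_T _ rc_Ym) (rc_T _ rc_Ym)). Qed.

Fixpoint itr (k : nat) (f : cantor -> cantor) (x : cantor) : cantor :=
  match k with 0 => x | S k' => f (itr k' f x) end.
Definition Fper (h : cantor -> cantor) (k : nat) : Prop :=
  exists x, itr k h x = x /\ forall j, 0 < j -> j < k -> itr j h x <> x.

Lemma itr_eo (G h p0 p1 : cantor -> cantor)
  (H0 : forall y, G (p0 y) = p1 y) (H1 : forall y, G (p1 y) = p0 (h y)) :
  forall j y, itr (2*j) G (p0 y) = p0 (itr j h y) /\ itr (2*j) G (p1 y) = p1 (itr j h y)
    /\ itr (S (2*j)) G (p0 y) = p1 (itr j h y) /\ itr (S (2*j)) G (p1 y) = p0 (h (itr j h y)).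
Proof.
  induction j as [|j IH]; intro y.
  - simpl. rewrite H0, H1. auto.
  - replace (2 * S j) with (S (S (2 * j))) by lia.
    destruct (IH y) as (E0 & E1 & E2 & E3). simpl in *.
    rewrite E2, E3, H0, H1, H0, H1. auto.
Qed.

Lemma dyn_even (G h p0 p1 : cantor -> cantor)
  (H0 : forall y, G (p0 y) = p1 y) (H1 : forall y, G (p1 y) = p0 (h y))
  (I0 : forall y z, p0 y = p0 z -> y = z) (I1 : forall y z, p1 y = p1 z -> y = z)
  (D : forall y z, p0 y <> p1 z)
  (Cov : forall x, (exists y, x = p0 y) \/ (exists y, x = p1 y) \/ G x = x) :
  forall j, 0 < j -> (Fper G (2*j) <-> Fper h j).
Proof.
  intros j Hj. split.
  - intros (x & Hx & Hm). destruct (Cov x) as [[y ->]|[[y ->]|Hf]].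
    + destruct (itr_eo G h p0 p1 H0 H1 j y) as (E0 & _). rewrite E0 in Hx. apply I0 in Hx.
      exists y. split; auto. intros i Hi Hij Hc. apply (Hm (2*i)); try lia.
      destruct (itr_eo G h p0 p1 H0 H1 i y) as (E & _). rewrite E, Hc. reflexivity.
    + destruct (itr_eo G h p0 p1 H0 H1 j y) as (_ & E0 & _). rewrite E0 in Hx. apply I1 in Hx.
      exists y. split; auto. intros i Hi Hij Hc. apply (Hm (2*i)); try lia.
      destruct (itr_eo G h p0 p1 H0 H1 i y) as (_ & E & _). rewrite E, Hc. reflexivity.
    + exfalso. apply (Hm 1); try lia. simpl. exact Hf.
  - intros (y & Hy & Hm). exists (p0 y). split.
    + destruct (itr_eo G h p0 p1 H0 H1 j y) as (E0 & _). rewrite E0, Hy. reflexivity.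
    + intros i Hi Hik Hc. destruct (Nat.Even_or_Odd i) as [[m ->]|[m ->]].
      * destruct (itr_eo G h p0 p1 H0 H1 m y) as (E0 & _). rewrite E0 in Hc. apply I0 in Hc.
        apply (Hm m); auto; lia.
      * replace (2*m+1) with (S (2*m)) in Hc by lia.
        destruct (itr_eo G h p0 p1 H0 H1 m y) as (_ & _ & E2 & _). rewrite E2 in Hc.
        apply (D y (itr m h y)). symmetry; exact Hc.
Qed.

Definition Xb (b : bool) : cantor -> cantor := if b then Ym else Flip.
Fixpoint Rf (l : list bool) : cantor -> cantor :=
  match l with [] => fun x => x | b :: l' => fun x => Xb b (Tm (Rf l') x) end.

Lemma ccons_neq y z : ccons false y <> ccons true z.
Proof. intro H. apply ccons_inj in H. destruct H; discriminate. Qed.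

Lemma dyn_R b l j : 0 < j -> (Fper (Rf (b::l)) (2*j) <-> Fper (Rf l) j).
Proof.
  destruct b.
  - apply (dyn_even _ (Rf l) (fun y => ccons false (ccons true y)) (ccons true)).
    + intro; reflexivity.
    + intro; reflexivity.
    + intros y z H. apply ccons_inj in H. destruct H as [_ H]. apply ccons_inj in H. apply H.
    + intros y z H. apply ccons_inj in H. apply H.
    + intros y z. apply ccons_neq.
    + apply decomp2; intros [|] [|] z.
      * right; left. exists (ccons true z); reflexivity.
      * right; left. exists (ccons false z); reflexivity.
      * left. exists z; reflexivity.
      * right; right. reflexivity.
  - apply (dyn_even _ (Rf l) (ccons false) (ccons true)).
    + intro; reflexivity.
    + intro; reflexivity.
    + intros y z H. apply ccons_inj in H. apply H.
    + intros y z H. apply ccons_inj in H. apply H.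
    + intros y z. apply ccons_neq.
    + apply decomp1; intros [|] z.
      * right; left. exists z; reflexivity.
      * left. exists z; reflexivity.
Qed.

Lemma one_R b l : Fper (Rf (b::l)) 1 <-> b = true.
Proof.
  destruct b; split; auto; try discriminate.
  - intros _. exists (ccons false (ccons false (fun _ => false))). split; [reflexivity|].
    intros; lia.
  - intros (x & Hx & _). simpl in Hx.
    assert (G : forall a z, Flip (Tm (Rf l) (ccons a z)) <> ccons a z).
    { intros [|] z Hz.
      + change (ccons false (Rf l z) = ccons true z) in Hz. apply ccons_inj in Hz. destruct Hz; discriminate.
      + change (ccons true z = ccons false z) in Hz. apply ccons_inj in Hz. destruct Hz; discriminate. }
    rewrite (ccons_eta x) in Hx. exfalso; exact (G _ _ Hx).
Qed.

Lemma Rf_inj : forall l l', length l = length l' ->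
  (forall k, 0 < k -> (Fper (Rf l) k <-> Fper (Rf l') k)) -> l = l'.
Proof.
  induction l as [|b l IH]; intros [|b' l'] Hlen H; try discriminate; auto.
  assert (Hb : b = b').
  { pose proof (H 1 ltac:(lia)) as H1. rewrite !one_R in H1.
    destruct b, b'; auto; exfalso; intuition discriminate. }
  subst b'. f_equal. apply IH. { simpl in Hlen; lia. }
  intros k Hk. rewrite <- (dyn_R b l k Hk), <- (dyn_R b l' k Hk). apply H. lia.
Qed.

Lemma itr_conj c e r : (forall x, c (e x) = r (c x)) -> forall k x, itr k r (c x) = c (itr k e x).
Proof. intros H; induction k; simpl; intros; [reflexivity| rewrite IHk, H; reflexivity]. Qed.

Lemma Fper_conj e r : conjV e r -> forall k, Fper e k <-> Fper r k.
Proof.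
  intros (c & Hc & Heq) k.
  destruct Hc as [[_ (ci & _ & Hci1 & Hci2)] _].
  assert (Hp : forall x, c (e x) = r (c x)) by (intro x; exact (f_equal (fun F => F x) Heq)).
  assert (Cinj : forall a b, c a = c b -> a = b)
    by (intros a b Hab; rewrite <- (Hci1 a), <- (Hci1 b), Hab; reflexivity).
  split.
  - intros (x & Hx & Hm). exists (c x). split.
    + rewrite (itr_conj c e r Hp), Hx. reflexivity.
    + intros j Hj1 Hj2 Hc'. rewrite (itr_conj c e r Hp) in Hc'. apply Cinj in Hc'.
      exact (Hm j Hj1 Hj2 Hc').
  - intros (y & Hy & Hm). exists (ci y). split.
    + apply Cinj. rewrite <- (itr_conj c e r Hp), !Hci2, Hy. reflexivity.
    + intros j Hj1 Hj2 Hc'. apply (Hm j Hj1 Hj2).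
      replace y with (c (ci y)) by apply Hci2. rewrite (itr_conj c e r Hp), Hc'. reflexivity.
Qed.

Lemma inV_inv c ci : inV c -> (forall x, ci (c x) = x) -> (forall x, c (ci x) = x) -> inV ci.
Proof. intros [_ Hr] H1 H2. apply (inV_of ci c H1 H2).
  - intro x. destruct (Hr (ci x)) as (w1&w2&[y Hy]&Hm). exists w2, w1. split.
    + exists y. rewrite <- Hm, <- Hy, H2. reflexivity.
    + intro y'. rewrite <- Hm, H1. reflexivity.
  - exact Hr.
Qed.

Lemma conjV_sym g h : conjV g h -> conjV h g.
Proof.
  intros (c & Hc & Heq). pose proof Hc as Hc'.
  destruct Hc' as [[_ (ci & _ & Hci1 & Hci2)] _].
  exists ci. split; [apply (inV_inv c ci Hc Hci1 Hci2)|].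
  apply functional_extensionality; intro x.
  pose proof (f_equal (fun F => F (ci x)) Heq) as E. simpl in E. rewrite Hci2 in E.
  rewrite <- E, Hci1. reflexivity.
Qed.

Lemma V_id : inV (fun x => x).
Proof. assert (R : rigid_cover (fun x => x)).
  { intro x; exists [], []. split; [apply in_cone0| intro y; rewrite wcat_nil; reflexivity]. }
  apply (inV_of (fun x => x) (fun x => x)); auto. Qed.

Lemma conjV_refl g : conjV g g.
Proof. exists (fun x => x). split; [apply V_id|reflexivity]. Qed.

Lemma eval_app l1 l2 : eval_word (l1 ++ l2) = fun x => eval_word l1 (eval_word l2 x).
Proof. induction l1 as [|a l1 IH]; [reflexivity|].
  change (eval_word (a :: (l1 ++ l2)) = fun x => a (eval_word l1 (eval_word l2 x))).
  change (eval_word (a :: (l1 ++ l2))) with (fun x => a (eval_word (l1 ++ l2) x)).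
  rewrite IH. reflexivity. Qed.

Lemma in_ball_comp S m n x y : in_ball S m x -> in_ball S n y -> in_ball S (m+n) (fun z => x (y z)).
Proof. intros (l1 & F1 & L1 & ->) (l2 & F2 & L2 & ->). exists (l1 ++ l2).
  split; [apply Forall_app; auto|]. split; [rewrite length_app; lia|]. rewrite eval_app. reflexivity. Qed.

Lemma in_ball_mono S m n x : m <= n -> in_ball S m x -> in_ball S n x.
Proof. intros H (l & F & L & E). exists l. repeat split; auto; lia. Qed.

Lemma in_ball_ext S n v w : (forall z, v z = w z) -> in_ball S n v -> in_ball S n w.
Proof. intros H Hb. replace w with v; auto. apply functional_extensionality; auto. Qed.

Lemma in_ball_V S v : generating_set S -> inV v -> exists n, in_ball S n v.
Proof. intros [_ HS] Hv. destruct (HS v Hv) as (l & F & E). exists (length l), l. auto. Qed.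

Lemma in_ball_id S : in_ball S 0 (fun x => x).
Proof. exists []. repeat split; auto. Qed.

Lemma Rf_ball S c : in_ball S c Flip -> in_ball S c Ym -> in_ball S c (Tm Flip) ->
  in_ball S c (Tm Ym) -> in_ball S c gm -> in_ball S c gi ->
  forall l, in_ball S (3*c*length l) (Tm (Rf l)) /\ in_ball S (c + 3*c*length l) (Rf l).
Proof.
  intros B1 B2 B3 B4 B5 B6.
  assert (U : forall l, in_ball S (3*c*length l) (Tm (Rf l))).
  { induction l as [|b l IH].
    - eapply in_ball_ext; [|eapply in_ball_mono; [|apply in_ball_id]; lia]. intro z. simpl. rewrite Tm_id. reflexivity.
    - assert (BX : in_ball S c (Tm (Xb b))) by (destruct b; auto).
      eapply in_ball_ext.
      2:{ eapply in_ball_mono; [|apply (in_ball_comp _ _ _ _ _ BX (in_ball_comp _ _ _ _ _ B5 (in_ball_comp _ _ _ _ _ IH B6)))].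
          simpl length. lia. }
      intro z. simpl. rewrite <- TT, <- Tm_comp. reflexivity. }
  intro l. split; auto. destruct l as [|b l].
  - simpl. eapply in_ball_mono; [|apply in_ball_id]. lia.
  - assert (BX : in_ball S c (Xb b)) by (destruct b; auto).
    eapply in_ball_mono; [|apply (in_ball_comp _ _ _ _ _ BX (U l))]. simpl length. lia.
Qed.

Fixpoint words {A} (al : list A) (n : nat) : list (list A) :=
  match n with 0 => [[]] | S n' => [] :: flat_map (fun a => map (cons a) (words al n')) al end.

Lemma flat_map_len {A} (al : list A) (W : list (list A)) :
  length (flat_map (fun a => map (cons a) W) al) = length al * length W.
Proof. induction al; simpl; auto. rewrite length_app, length_map, IHal. reflexivity. Qed.

Lemma words_len {A} (al : list A) n : length (words al n) <= (length al + 1)^n.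
Proof. induction n; simpl; auto. rewrite flat_map_len.
  assert (0 < (length al + 1)^n) by (apply Nat.neq_0_lt_0, Nat.pow_nonzero; lia). nia. Qed.

Lemma words_in {A} (al : list A) n l : length l <= n -> (forall a, In a l -> In a al) -> In l (words al n).
Proof. revert l; induction n; intros l Hl Ha.
  - destruct l; simpl in *; [auto|lia].
  - destruct l as [|a l]; simpl; [auto|]. right. apply in_flat_map. exists a. split.
    + apply Ha; simpl; auto.
    + apply in_map. apply IHn; simpl in *; auto; lia.
Qed.

Lemma words_spec {A} (al : list A) n l : In l (words al n) -> length l <= n /\ forall a, In a l -> In a al.
Proof. revert l; induction n; intros l H; simpl in H.
  - destruct H as [<-|[]]. simpl; split; auto; intros _ [].
  - destruct H as [<-|H]. { simpl; split; [lia|intros _ []]. }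
    apply in_flat_map in H as (a & Ha & H). apply in_map_iff in H as (l' & <- & Hl').
    destruct (IHn l' Hl') as [L1 L2]. simpl. split; [lia|]. intros x [<-|Hx]; auto.
Qed.

Definition inv_of (s : cantor -> cantor) : cantor -> cantor :=
  epsilon (inhabits (fun x : cantor => x)) (fun t => (forall x, s (t x) = x) /\ (forall x, t (s x) = x)).
Definition alph (S : list (cantor -> cantor)) := S ++ map inv_of S.

Lemma letter_in_alph S t : is_letter S t -> In t (alph S).
Proof. intros (s & Hs & [->|[H1 H2]]); apply in_or_app; [left; auto|right].
  pose proof (epsilon_spec (inhabits (fun x : cantor => x))
    (fun t => (forall x, s (t x) = x) /\ (forall x, t (s x) = x)) (ex_intro _ t (conj H1 H2))) as Hsp.
  fold (inv_of s) in Hsp.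
  replace t with (inv_of s); [apply in_map; auto|].
  apply functional_extensionality; intro x. rewrite <- (proj1 Hsp x) at 2. symmetry. apply H2.
Qed.

Lemma alph_letter S : generating_set S -> forall t, In t (alph S) -> is_letter S t.
Proof. intros [HV _] t Ht. apply in_app_or in Ht as [Ht|Ht].
  - exists t. auto.
  - apply in_map_iff in Ht as (s & <- & Hs). exists s. split; auto. right.
    destruct (HV s Hs) as [[_ (g & _ & G1 & G2)] _].
    apply (epsilon_spec (inhabits (fun x : cantor => x))
      (fun t => (forall x, s (t x) = x) /\ (forall x, t (s x) = x))).
    exists g. auto.
Qed.

Lemma ball_sub S n v : in_ball S n v -> In v (map eval_word (words (alph S) n)).
Proof. intros (l & F & L & ->). apply in_map. apply words_in; auto.
  intros a Ha. apply letter_in_alph. rewrite Forall_forall in F. auto. Qed.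

Lemma sub_ball S n v : generating_set S -> In v (map eval_word (words (alph S) n)) -> in_ball S n v.
Proof. intros HS H. apply in_map_iff in H as (l & <- & Hl). apply words_spec in Hl as [L1 L2].
  exists l. repeat split; auto. apply Forall_forall. intros; apply alph_letter; auto. Qed.

Definition pw_nc (reps : list (cantor -> cantor)) : Prop :=
  forall i j, i < length reps -> j < length reps -> i <> j ->
    ~ conjV (nth i reps (fun x => x)) (nth j reps (fun x => x)).

Lemma greedy (B : list (cantor -> cantor)) : exists reps,
  (forall r, In r reps -> In r B) /\ pw_nc reps /\
  (forall v, In v B -> exists r, In r reps /\ conjV v r).
Proof.
  induction B as [|x B (reps & H1 & H2 & H3)].
  - exists []. repeat split; try (intros; simpl in *; tauto). intros i j Hi; simpl in Hi; lia.
  - destruct (classic (exists r, In r reps /\ conjV x r)) as [Hx|Hx].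
    + exists reps. repeat split.
      * intros r Hr; right; auto.
      * exact H2.
      * intros v [<-|Hv]; auto.
    + exists (x :: reps). repeat split.
      * intros r [<-|Hr]; [left|right]; auto.
      * intros [|i] [|j] Hi Hj Hij; simpl in *; try lia.
        -- intro Hc. apply Hx. exists (nth j reps (fun x => x)). split; auto. apply nth_In. lia.
        -- intro Hc. apply Hx. exists (nth i reps (fun x => x)). split; [apply nth_In; lia|].
           apply conjV_sym; auto.
        -- apply H2; lia.
      * intros v [<-|Hv].
        -- exists x. split; [left; auto|apply conjV_refl].
        -- destruct (H3 v Hv) as (r & Hr & Hc). exists r. split; [right|]; auto.
Qed.

Lemma exists_count S : generating_set S -> forall n, exists k, conj_count S n k.
Proof. intros HS n. destruct (greedy (map eval_word (words (alph S) n))) as (reps & H1 & H2 & H3).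
  exists (length reps), reps. repeat split; auto.
  - intros r Hr. apply sub_ball; auto.
  - intros v Hv. apply H3. apply ball_sub; auto.
Qed.

Lemma count_upper S n k : conj_count S n k -> k <= (length (alph S) + 1)^n.
Proof. intros (reps & <- & H1 & H2 & H3).
  assert (ND : NoDup reps).
  { apply (proj2 (NoDup_nth reps (fun x => x))). intros i j Hi Hj E.
    destruct (Nat.eq_dec i j); auto. exfalso. apply (H2 i j Hi Hj n0). rewrite E. apply conjV_refl. }
  eapply Nat.le_trans; [|apply (words_len (alph S) n)].
  rewrite <- (length_map eval_word). apply NoDup_incl_length; auto.
  intros r Hr. apply ball_sub. auto.
Qed.

Lemma NoDup_map_on {A B} (f : A -> B) l : (forall x y, In x l -> In y l -> f x = f y -> x = y) -> NoDup l -> NoDup (map f l).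
Proof. induction l as [|a l IH]; intros Hinj Hnd; simpl; constructor.
 - intro Hin. apply in_map_iff in Hin as (y & Hy & Hyl). inversion Hnd; subst.
   assert (y = a) by (apply Hinj; simpl; auto). subst; contradiction.
 - inversion Hnd; subst. apply IH; auto. intros; apply Hinj; simpl; auto.
Qed.

Fixpoint all_bits (n : nat) : list (list bool) :=
  match n with 0 => [[]] | S n' => map (cons false) (all_bits n') ++ map (cons true) (all_bits n') end.

Lemma all_bits_len n : length (all_bits n) = 2^n.
Proof. induction n; simpl; auto. rewrite length_app, !length_map, IHn. lia. Qed.

Lemma all_bits_mem n l : In l (all_bits n) -> length l = n.
Proof. revert l; induction n; simpl; intros l H.
  - destruct H as [<-|[]]; auto.
  - apply in_app_or in H as [H|H]; apply in_map_iff in H as (l' & <- & H); simpl; f_equal; auto.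
Qed.

Lemma all_bits_nd n : NoDup (all_bits n).
Proof. induction n; simpl. { constructor; [intros []|constructor]. }
  apply NoDup_app.
  - apply NoDup_map_on; auto. intros x y _ _ H; injection H; auto.
  - apply NoDup_map_on; auto. intros x y _ _ H; injection H; auto.
  - intros a H1 H2. apply in_map_iff in H1 as (x & <- & _). apply in_map_iff in H2 as (y & H & _).
    discriminate.
Qed.

Lemma count_lower S N k n : conj_count S N k -> (forall l, length l = n -> in_ball S N (Rf l)) -> 2^n <= k.
Proof.
  intros (reps & <- & H1 & H2 & H3) HB.
  set (rho := fun l => epsilon (inhabits (fun x : cantor => x)) (fun r => In r reps /\ conjV (Rf l) r)).
  assert (Hrho : forall l, length l = n -> In (rho l) reps /\ conjV (Rf l) (rho l)).
  { intros l Hl. apply (epsilon_spec (inhabits (fun x : cantor => x)) (fun r => In r reps /\ conjV (Rf l) r)).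
    apply H3. apply HB; auto. }
  rewrite <- all_bits_len, <- (length_map rho). apply NoDup_incl_length.
  - apply NoDup_map_on; [|apply all_bits_nd]. intros x y Hx Hy E.
    apply all_bits_mem in Hx. apply all_bits_mem in Hy.
    apply Rf_inj; [congruence|]. intros j _.
    rewrite (Fper_conj _ _ (proj2 (Hrho x Hx))), (Fper_conj _ _ (proj2 (Hrho y Hy))), E. reflexivity.
  - intros r Hr. apply in_map_iff in Hr as (l & <- & Hl). apply Hrho. apply all_bits_mem; auto.
Qed.

Theorem mainTheorem8 :
  forall S : list (cantor -> cantor), generating_set S ->
    exists f : nat -> nat,
      (forall n, conj_count S n (f n)) /\ equiv_growth f (fun n => 2 ^ n).
Proof.
  intros S HS.
  set (f := fun n => proj1_sig (constructive_indefinite_description _ (exists_count S HS n))).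
  assert (Hf : forall n, conj_count S n (f n)).
  { intro n; unfold f; destruct (constructive_indefinite_description _ _); simpl; auto. }
  exists f. split; [exact Hf|]. split.
  - set (a := length (alph S) + 1). exists a. split; [lia|]. intro n.
    pose proof (count_upper S n (f n) (Hf n)) as Hu. fold a in Hu.
    assert (Ha : a <= 2^a) by (apply Nat.lt_le_incl, Nat.pow_gt_lin_r; lia).
    assert (a^n <= 2^(a*n+a)).
    { eapply Nat.le_trans; [apply (Nat.pow_le_mono_l _ _ n Ha)|].
      rewrite <- Nat.pow_mul_r. apply Nat.pow_le_mono_r; lia. }
    nia.
  - destruct (in_ball_V S _ HS V_Flip) as [c1 B1].
    destruct (in_ball_V S _ HS V_Ym) as [c2 B2].
    destruct (in_ball_V S _ HS V_TFlip) as [c3 B3].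
    destruct (in_ball_V S _ HS V_TYm) as [c4 B4].
    destruct (in_ball_V S _ HS V_gm) as [c5 B5].
    destruct (in_ball_V S _ HS V_gi) as [c6 B6].
    set (c := c1+c2+c3+c4+c5+c6).
    assert (RB : forall l, in_ball S (3*c*length l) (Tm (Rf l)) /\ in_ball S (c + 3*c*length l) (Rf l)).
    { apply Rf_ball; eapply in_ball_mono; try eassumption; unfold c; lia. }
    exists (3*c+1). split; [lia|]. intro n.
    assert (2^n <= f ((3*c+1)*n + (3*c+1))).
    { apply (count_lower S _ _ n (Hf _)). intros l Hl.
      eapply in_ball_mono; [|apply (proj2 (RB l))]. rewrite Hl. nia. }
    nia.
Qed.
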